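(* The zero-error capacity of the $(w,d)$ sliding-window symmetric channel over $\mathbb{Z}_q$ satisfies $$1-\frac{1}{w}\log_q V^w_{2d}(q)\ \le\ C_0\ \le\ 1-\frac{d}{w}\log_q(q-1).$$ Moreover, if $d\ge w/2$ then $C_0=0$.
   Context: $V^n_r(q)=\sum_{i=0}^{\min(r,n)}\binom{n}{i}(q-1)^i$. Integers $w\ge1$, $0\le d\le w$, $q\ge2$. The $(w,d)$ sliding-window symmetric channel has input and output alphabet $\mathbb{Z}_q$; a noise word $v(0:n-1)\in\mathbb{Z}_q^n$ is admissible if for some initial pattern $v(-w:-1)\in\mathbb{Z}_q^w$ every $w$ consecutive entries of $(v(-w),\dots,v(n-1))$ contain at most $d$ nonzero entries; the output is $y(t)=x(t)+v(t)\bmod q$. A zero-error code of length $n$ is a set $\mathcal{F}\subseteq\mathbb{Z}_q^n$ such that no output word can be produced by two distinct codewords under admissible noise; $C_0=\sup_n\sup_{\mathcal{F}}\log_q|\mathcal{F}|/n$. *)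

(* Defs.v *)
From mathcomp Require Import all_boot.
From Stdlib Require Import Reals.

Set Implicit Arguments.
Unset Strict Implicit.
Unset Printing Implicit Defensive.

Definition Vball (n r q : nat) : nat :=
  \sum_(i < (minn r n).+1) 'C(n, i) * (q - 1) ^ i.

Definition word (n q : nat) := {ffun 'I_n -> 'I_q}.

(* A noise word v(0:n-1) is admissible for the (w,d) sliding-window channel
   if there is an initial pattern v(-w:-1) such that every w consecutive
   entries of (v(-w),...,v(n-1)) contain at most d nonzero entries. *)
Definition admissible (w d n q : nat) (v : word n q) : Prop :=
  exists u : word w q,
    let s := [seq nat_of_ord (u i) | i <- enum 'I_w] ++
             [seq nat_of_ord (v i) | i <- enum 'I_n] in
    forall j : nat, j <= n ->
      count (fun a => a != 0) (take w (drop j s)) <= d.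

Definition output (n q : nat) (x v : word n q) : 'I_n -> nat :=
  fun t => (x t + v t) %% q.

Definition zero_error (w d n q : nat) (F : {set word n q}) : Prop :=
  forall x1 x2 : word n q, x1 \in F -> x2 \in F -> x1 <> x2 ->
  forall v1 v2 : word n q, admissible w d v1 -> admissible w d v2 ->
    ~ (forall t, output x1 v1 t = output x2 v2 t).

Definition logq (q : nat) (x : R) : R := (ln x / ln (INR q))%R.

Definition rates (w d q : nat) (r : R) : Prop :=
  exists (n : nat) (F : {set word n q}),
    0 < n /\ 0 < #|F| /\ zero_error w d F /\
    r = (logq q (INR #|F|) / INR n)%R.

Definition is_C0 (w d q : nat) (C : R) : Prop := is_lub (rates w d q) C.

(* Main.v *)
Require Import Defs.
From mathcomp Require Import all_boot zify.
From Stdlib Require Import Reals Lra.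
From mathcomp Require Import ssrnat.
Set Implicit Arguments. Unset Strict Implicit. Unset Printing Implicit Defensive.
Lemma count_window (s : seq nat) j w : j + w <= size s ->
  count (fun a => a != 0) (take w (drop j s)) = \sum_(i < w) (nth 0 s (j + i) != 0).
Proof.
elim: w j => [|w IH] j H; first by rewrite take0 big_ord0.
rewrite (drop_nth 0); last by lia.
rewrite /= IH; last by lia.
rewrite big_ord_recl addn0; congr (_ + _); apply: eq_bigr => i _.
by rewrite /= addSnnS.
Qed.

Lemma sum_shift (P : pred nat) w j : 0 < w ->
  \sum_(i < w) P ((j + i) %% w) = \sum_(i < w) P i.
Proof.
move=> w0; elim: j => [|j IH].
  by apply: eq_bigr => i _; rewrite add0n modn_small.
rewrite -IH; case: w w0 {IH} => // w _.
rewrite big_ord_recr big_ord_recl /= addnC; congr (_ + _).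
  by rewrite addn0 addSnnS modnDr.
by apply: eq_bigr => i _; rewrite /bump /= add1n addSnnS.
Qed.

Lemma sum_lt w d : \sum_(i < w) (i < d) = minn w d.
Proof. elim: w => [|w IH]; first by rewrite big_ord0 ?min0n. rewrite big_ord_recr /= IH. case: (ltnP w d) => /= H. all: lia. Qed.

Lemma sum_ge w d : \sum_(i < w) (d <= i) = w - d.
Proof. elim: w => [|w IH]; first by rewrite big_ord0 ?sub0n. rewrite big_ord_recr /= IH. case: (leqP d w) => /= H; rewrite ?addn1 ?addn0; lia. Qed.

Lemma card_set_sum n (P : pred 'I_n) : #|[set i | P i]| = \sum_(i < n) P i.
Proof. by rewrite -sum1_card big_mkcond /=; apply: eq_bigr => i _; rewrite inE; case: (P i). Qed.

Lemma nth_s w n q (u : word w q) (v : word n q) k :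
  (forall i, nat_of_ord (u i) = 0) ->
  nth 0 ([seq nat_of_ord (u i) | i <- enum 'I_w] ++ [seq nat_of_ord (v i) | i <- enum 'I_n]) k != 0 ->
  exists t : 'I_n, nat_of_ord t + w = k /\ nat_of_ord (v t) != 0.
Proof.
move=> u0; rewrite nth_cat size_map size_enum_ord.
case: ltnP => Hk.
  by rewrite (nth_map (Ordinal Hk)) ?size_enum_ord // u0.
case: (ltnP (k - w) n) => Hk2; last by rewrite nth_default // size_map size_enum_ord.
rewrite (nth_map (Ordinal Hk2)) ?size_enum_ord // => H.
exists (nth (Ordinal Hk2) (enum 'I_n) (k - w)); split => //.
rewrite nth_enum_ord //; lia.
Qed.

Lemma adm_pattern w d n q (P : pred nat) (v : word n q) : 0 < w -> 0 < q ->
  \sum_(i < w) P i <= d -> (forall t : 'I_n, nat_of_ord (v t) != 0 -> P (t %% w)) ->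
  admissible w d v.
Proof.
move=> w0 q0 Hs Hv.
pose u : word w q := [ffun _ => Ordinal q0].
have u0 : forall i0, nat_of_ord (u i0) = 0 by move=> i0; rewrite /u ffunE.
exists u; cbv zeta => j Hj.
rewrite count_window; last by rewrite size_cat !size_map -!enumT -!cardT !card_ord; lia.
apply: leq_trans Hs; rewrite -(sum_shift P j w0).
apply: leq_sum => i _.
case E: (_ != 0) => //=.
have [t [Ht Hvt]] := nth_s u0 E.
have := Hv t Hvt; rewrite -Ht modnDr.
by move=> ->.
Qed.

Lemma ub_count w d n q (F : {set word n q}) : 0 < w -> 0 < q -> d <= w -> zero_error w d F ->
  #|F| * q ^ #|[set t : 'I_n | t %% w < d]| <= q ^ n.
Proof.
move=> w0 q0 dw HF.
set D := [set t : 'I_n | t %% w < d].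
pose z : 'I_q := Ordinal q0.
pose N := [set v : word n q | v \in pffun_on z D predT].
have cN : #|N| = q ^ #|D|.
  transitivity #|pffun_on z D predT|; first by apply: eq_card => v; rewrite inE.
  by rewrite card_pffun_on card_ord.
have admN : forall v, v \in N -> admissible w d v.
  move=> v; rewrite inE => /pffun_onP [/supportP Hs _].
  apply: (@adm_pattern w d n q (fun k => k < d)) => //.
    by rewrite sum_lt geq_minr.
  move=> t Hvt; case E: (t \in D); first by move: E; rewrite inE.
  by move: Hvt; rewrite Hs ?E.
pose out (p : word n q * word n q) : word n q := [ffun t => Ordinal (ltn_pmod (p.1 t + p.2 t) q0)].
have inj : {in setX F N &, injective out}.
  move=> [x1 v1] [x2 v2] /setXP [/= Hx1 Hv1] /setXP [/= Hx2 Hv2] Heq.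
  have Ht : forall t, (x1 t + v1 t) %% q = (x2 t + v2 t) %% q.
    by move=> t; move/ffunP: Heq => /(_ t); rewrite !ffunE => /(congr1 val).
  case: (eqVneq x1 x2) => [Ex|Nx]; last first.
    by exfalso; apply: (HF x1 x2 Hx1 Hx2 (elimN eqP Nx) v1 v2 (admN _ Hv1) (admN _ Hv2)).
  subst x2; congr pair; apply/ffunP => t; apply/val_inj.
  have /eqP := Ht t; rewrite eqn_modDl !modn_small //; by move/eqP.
rewrite -cN -cardsX -(card_in_imset inj).
apply: leq_trans (max_card _) _.
by rewrite card_ffun !card_ord.
Qed.

Lemma dens w d n : 0 < w -> d <= w -> d * n <= (\sum_(t < n) (t %% w < d)) * w.
Proof.
move=> w0 dw; elim/ltn_ind: n => n IH.
case: (ltnP n w) => Hn.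
  have -> : \sum_(t<n) (t %% w < d) = minn n d.
    rewrite -sum_lt; apply: eq_bigr => t _; rewrite modn_small //; apply: ltn_trans (ltn_ord t) Hn.
  case: (leqP n d) => H; nia.
have Hm : n - w < n by lia.
have := IH _ Hm; move: Hm.
have -> : n = (n - w) + w by rewrite subnK.
rewrite addnK big_split_ord /= => _ IH2.
have -> : \sum_(i < w) ((rshift (n - w) i) %% w < d) = d.
  by rewrite /= (sum_shift (fun k => k < d)) // sum_lt; lia.
nia.
Qed.

Lemma small_code w d n q (F : {set word n q}) : 0 < w -> 0 < q -> w <= 2 * d ->
  zero_error w d F -> #|F| <= 1.
Proof.
move=> w0 q0 w2d HF; rewrite leqNgt; apply/negP => /card_gt1P [x1 [x2 [Hx1 Hx2 Nx]]].
pose z : 'I_q := Ordinal q0.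
pose v1 : word n q := [ffun t : 'I_n => if t %% w < d then Ordinal (ltn_pmod (x2 t + q - x1 t) q0) else z].
pose v2 : word n q := [ffun t : 'I_n => if t %% w < d then z else Ordinal (ltn_pmod (x1 t + q - x2 t) q0)].
apply: (HF x1 x2 Hx1 Hx2 (elimN eqP Nx) v1 v2).
- apply: (@adm_pattern w d n q (fun k => k < d)) => //; first by rewrite sum_lt geq_minr.
  move=> t; rewrite /v1 ffunE; by case: ifP.
- apply: (@adm_pattern w d n q (fun k => d <= k)) => //; first by rewrite sum_ge; lia.
  move=> t; rewrite /v2 ffunE; case: ifP => //= H _; rewrite leqNgt H.
  done.
move=> t; rewrite /output /v1 /v2 !ffunE; case: ifP => _ /=.
  rewrite addn0 modnDmr.
  have -> : x1 t + (x2 t + q - x1 t) = x2 t + q by have := ltn_ord (x1 t); lia.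
  by rewrite modnDr.
rewrite addn0 modnDmr.
have -> : x2 t + (x1 t + q - x2 t) = x1 t + q by have := ltn_ord (x2 t); lia.
by rewrite modnDr.
Qed.

Definition hdist n q (x y : word n q) := #|[set t | x t != y t]|.

Lemma exact_card n q (x : word n q) (S : {set 'I_n}) :
  #|[set y : word n q | [set t | x t != y t] == S]| = (q.-1) ^ #|S|.
Proof.
pose F := fun t => if t \in S then predC1 (x t) else pred1 (x t).
transitivity #|(family_mem (finfun.fmem F) : simpl_pred (word n q))|.
  apply: eq_card => y; rewrite inE; apply/eqP/familyP => [E t | H].
    rewrite /F -E inE; case: (eqVneq (x t) (y t)) => H /=.
      by rewrite inE H.
    by rewrite inE eq_sym.
  apply/setP => t; rewrite inE; have := H t; rewrite /F.
  case: (t \in S); rewrite inE /=; first by rewrite eq_sym.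
  by move/eqP ->; rewrite eqxx.
rewrite card_family /image_mem foldrE big_map big_enum /=.
rewrite (eq_bigr (fun t => if t \in S then q.-1 else 1)); last first.
  move=> t _; rewrite /F; case: (t \in S).
    by rewrite cardC1 card_ord.
  by rewrite card1.
by rewrite -big_mkcond prod_nat_const.
Qed.

Lemma pow_expn m k : Nat.pow m k = m ^ k.
Proof. elim: k => [|k IH] //=; by rewrite IH expnS mulnE. Qed.

Lemma ball_card n q (x : word n q) r :
  #|[set y : word n q | hdist x y <= r]| = Vball n r q.
Proof.
rewrite -sum1_card (eq_bigl (fun y => hdist x y <= r)); last by move=> y; rewrite inE.
rewrite (partition_big (fun y : word n q => [set t | x t != y t]) (fun S : {set 'I_n} => #|S| <= r)) //.
rewrite (eq_bigr (fun S : {set 'I_n} => (q.-1) ^ #|S|)); last first.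
  move=> S HS; rewrite -(exact_card x S) -sum1_card; apply: eq_bigl => y.
  rewrite inE /hdist; case: eqP => [->|_]; by rewrite ?HS ?andbF.
set m := minn r n.
rewrite (partition_big (fun S : {set 'I_n} => (inord #|S| : 'I_m.+1)) predT) //.
rewrite /Vball -/m; apply: eq_bigr => i _.
have Si : forall S : {set 'I_n}, (#|S| <= r) && (inord #|S| == i) = (#|S| == i).
  move=> S; have cS : #|S| <= n by rewrite -[n in _ <= n]card_ord max_card.
  have := ltn_ord i; rewrite ltnS => Hi.
  apply/idP/idP.
    by move=> /andP [H1 /eqP <-]; rewrite inordK // ltnS leq_min H1 cS.
  move/eqP => E; rewrite E; apply/andP; split; first by apply: leq_trans Hi (geq_minl _ _).
  by apply/eqP/val_inj; rewrite /= inordK // ltnS.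
rewrite (eq_bigl _ _ Si).
rewrite (eq_bigr (fun _ => (q.-1) ^ i)); last by move=> S /eqP ->.
rewrite (eq_bigl (fun S => S \in [set S : {set 'I_n} | #|S| == i])); last by move=> S; rewrite inE.
by rewrite sum_nat_const card_draws card_ord subn1 pow_expn.
Qed.

Lemma hdist_sym n q (x y : word n q) : hdist x y = hdist y x.
Proof. by rewrite /hdist; apply: eq_card => t; rewrite !inE eq_sym. Qed.

Lemma card_bigcup_le (I T : finType) (F : {set I}) (B : I -> {set T}) :
  #|\bigcup_(i in F) B i| <= \sum_(i in F) #|B i|.
Proof.
apply: (big_ind2 (fun (A : {set T}) k => #|A| <= k)) => //.
  by rewrite cards0.
move=> A1 k1 A2 k2 H1 H2; apply: leq_trans (leq_card_setU _ _) _.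
exact: leq_add.
Qed.

Lemma gv w d q : exists F : {set word w q},
  (forall x1 x2, x1 \in F -> x2 \in F -> x1 != x2 -> 2 * d < hdist x1 x2) /\
  q ^ w <= #|F| * Vball w (2 * d) q.
Proof.
pose P := fun A : {set word w q} =>
  [forall x1 in A, forall x2 in A, (x1 != x2) ==> (2 * d < hdist x1 x2)].
have P0 : P set0 by apply/forall_inP => x; rewrite inE.
have [F mF _] := maxset_exists P0.
have PF := maxsetp mF.
have far : forall x1 x2, x1 \in F -> x2 \in F -> x1 != x2 -> 2 * d < hdist x1 x2.
  move=> x1 x2 H1 H2; move/forall_inP: PF => /(_ x1 H1) /forall_inP /(_ x2 H2) /implyP; apply.
exists F; split => //.
have cover : forall y, exists2 x, x \in F & hdist x y <= 2 * d.
  move=> y; case: (boolP [exists x in F, hdist x y <= 2 * d]) => [/exists_inP [x ? ?]| H].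
    by exists x.
  exfalso.
  have Hy : forall x, x \in F -> 2 * d < hdist y x.
    move=> x Hx; rewrite hdist_sym ltnNge; apply/negP => Hc; move/negP: H; apply.
    by apply/exists_inP; exists x.
  have PyF : P (y |: F).
    apply/forall_inP => x1 /setU1P [-> | H1]; apply/forall_inP => x2 /setU1P [-> | H2];
      apply/implyP => N.
    - by rewrite eqxx in N.
    - exact: Hy.
    - by rewrite hdist_sym; apply: Hy.
    - exact: far.
  have E := maxsetsup mF PyF (subsetUr _ _).
  have yF : y \in F by rewrite -E setU11.
  move/negP: H; apply; apply/exists_inP; exists y => //.
  suff -> : hdist y y = 0 by [].
  by rewrite /hdist; apply/eqP; rewrite cards_eq0; apply/eqP/setP => t; rewrite !inE eqxx.
have sub : [set: word w q] \subset \bigcup_(x in F) [set y | hdist x y <= 2 * d].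
  apply/subsetP => y _; have [x Hx Hd] := cover y.
  by apply/bigcupP; exists x => //; rewrite inE.
have := subset_leq_card sub; rewrite cardsT card_ffun !card_ord => H.
apply: leq_trans H _; apply: leq_trans (card_bigcup_le _ _) _.
rewrite (eq_bigr (fun _ => Vball w (2 * d) q)); last by move=> x _; rewrite ball_card.
by rewrite sum_nat_const.
Qed.

Lemma adm_supp w d q (v : word w q) : admissible w d v ->
  #|[set t | nat_of_ord (v t) != 0]| <= d.
Proof.
case=> u; cbv zeta => A; have := A w (leqnn w).
rewrite count_window; last by rewrite size_cat !size_map -!enumT -!cardT !card_ord.
rewrite card_set_sum; congr (_ <= _); apply: eq_bigr => i _.
rewrite nth_cat size_map size_enum_ord ltnNge leq_addr /= addKn.
by rewrite (nth_map i) ?nth_ord_enum // size_enum_ord.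
Qed.

Lemma gv_zero w d q (F : {set word w q}) :
  (forall x1 x2, x1 \in F -> x2 \in F -> x1 != x2 -> 2 * d < hdist x1 x2) ->
  zero_error w d F.
Proof.
move=> Hfar x1 x2 H1 H2 N v1 v2 A1 A2 Hout.
have := Hfar x1 x2 H1 H2 (introN eqP N); rewrite ltnNge; move/negP; apply.
have sub : [set t | x1 t != x2 t] \subset
   [set t | nat_of_ord (v1 t) != 0] :|: [set t | nat_of_ord (v2 t) != 0].
  apply/subsetP => t; rewrite !inE; apply: contraR; rewrite negb_or !negbK.
  move=> /andP [/eqP e1 /eqP e2]; have := Hout t; rewrite /output e1 e2 !addn0 !modn_small //.
  by move=> e; apply/eqP/val_inj.
apply: leq_trans (subset_leq_card sub) _.
apply: leq_trans (leq_card_setU _ _) _.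
by rewrite mul2n -addnn leq_add // adm_supp.
Qed.
Lemma ln_le x y : (0 < x -> x <= y -> ln x <= ln y)%R.
Proof.
move=> Hx Hxy; case: (Rle_lt_or_eq_dec _ _ Hxy) => [H|<-]; last by apply: Rle_refl.
by apply: Rlt_le; apply: ln_increasing.
Qed.

Lemma INR_pos n : 0 < n -> (0 < INR n)%R.
Proof. by move=> H; apply: lt_0_INR; apply/ltP. Qed.

Lemma INR_le m n : m <= n -> (INR m <= INR n)%R.
Proof. by move=> H; apply: le_INR; apply/leP. Qed.

Lemma lnq_pos q : 2 <= q -> (0 < ln (INR q))%R.
Proof.
move=> Hq; rewrite -ln_1; apply: ln_increasing; first lra.
have := INR_le Hq; rewrite /= => H; simpl in H; lra.
Qed.

Lemma rate_le w d q n (F : {set word n q}) : 0 < w -> d <= w -> 2 <= q -> 0 < n -> 0 < #|F| ->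
  zero_error w d F ->
  (logq q (INR #|F|) / INR n <= 1 - INR d / INR w * logq q (INR (q - 1)))%R.
Proof.
move=> w0 dw q2 n0 F0 HF.
have H := ub_count w0 (ltnW q2) dw HF.
have Hd : d * n <= #|[set t : 'I_n | t %% w < d]| * w.
  by rewrite (@card_set_sum n (fun t : 'I_n => t %% w < d)); apply: dens.
move: H Hd; set m := #|[set t : 'I_n | t %% w < d]| => H Hd.
have HR := INR_le H; rewrite -!pow_expn mult_INR !pow_INR in HR.
have HdR := INR_le Hd; rewrite !mult_INR in HdR.
have L0 := lnq_pos q2.
have qpos : (0 < INR q)%R by apply: INR_pos; lia.
have Fpos : (0 < INR #|F|)%R by apply: INR_pos.
have := ln_le (Rmult_lt_0_compat _ _ Fpos (pow_lt _ m qpos)) HR.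
rewrite ln_mult // ?ln_pow //; last by apply: pow_lt.
move=> Hln.
have a0 : (0 <= ln (INR (q - 1)))%R.
  rewrite -ln_1; apply: ln_le; first lra. by apply: (INR_le (n:=q-1) (m:=1)); lia.
have aL : (ln (INR (q - 1)) <= ln (INR q))%R.
  apply: ln_le; first by apply: INR_pos; lia. by apply: INR_le; lia.
have n0R : (0 < INR n)%R by apply: INR_pos.
have w0R : (0 < INR w)%R by apply: INR_pos.
have dR : (0 <= INR d)%R by apply: pos_INR.
set L := ln (INR q) in L0 Hln aL *.
set a := ln (INR (q - 1)) in a0 aL *.
set X := ln (INR #|F|) in Hln *.
have P1 : (0 <= (INR m * INR w - INR d * INR n) * L)%R by apply: Rmult_le_pos; lra.
have P2 : (0 <= INR d * INR n * (L - a))%R by apply: Rmult_le_pos; [apply: Rmult_le_pos|]; lra.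
have key : (X * INR w <= L * INR n * INR w - INR d * INR n * a)%R by nra.
rewrite /logq -/L -/X -/a.
have pos : (0 < L * INR n * INR w)%R by apply: Rmult_lt_0_compat => //; apply: Rmult_lt_0_compat.
apply: (Rmult_le_reg_r _ _ _ pos).
replace (X / L / INR n * (L * INR n * INR w))%R with (X * INR w)%R by (field; lra).
replace ((1 - INR d / INR w * (a / L)) * (L * INR n * INR w))%R with
  (L * INR n * INR w - INR d * INR n * a)%R by (field; lra).
exact: key.
Qed.

Lemma rate_ge w d q (F : {set word w q}) : 0 < w -> 2 <= q ->
  q ^ w <= #|F| * Vball w (2 * d) q ->
  (1 - / INR w * logq q (INR (Vball w (2 * d) q)) <= logq q (INR #|F|) / INR w)%R.
Proof.
move=> w0 q2 H.
have qw : 0 < q ^ w by rewrite expn_gt0; apply/orP; left; lia.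
have F0 : 0 < #|F| by move: H; case: #|F| => //=; lia.
have V0 : 0 < Vball w (2 * d) q by move: H; case: (Vball w (2 * d) q) => //=; lia.
have HR := INR_le H; rewrite -!pow_expn mult_INR !pow_INR in HR.
have L0 := lnq_pos q2.
have qpos : (0 < INR q)%R by apply: INR_pos; lia.
have Fpos : (0 < INR #|F|)%R by apply: INR_pos.
have Vpos : (0 < INR (Vball w (2 * d) q))%R by apply: INR_pos.
have := ln_le (pow_lt _ w qpos) HR.
rewrite ln_mult // ln_pow // => Hln.
have w0R : (0 < INR w)%R by apply: INR_pos.
set L := ln (INR q) in L0 Hln *.
set X := ln (INR #|F|) in Hln *.
set Y := ln (INR (Vball w (2 * d) q)) in Hln *.
rewrite /logq -/L -/X -/Y.
have pos : (0 < L * INR w)%R by apply: Rmult_lt_0_compat.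
apply: (Rmult_le_reg_r _ _ _ pos).
replace (X / L / INR w * (L * INR w))%R with X by (field; lra).
replace ((1 - / INR w * (Y / L)) * (L * INR w))%R with (L * INR w - Y)%R by (field; lra).
lra.
Qed.

Theorem theorem7 (w d q : nat) :
  1 <= w -> d <= w -> 2 <= q ->
  exists C0 : R, is_C0 w d q C0 /\
    (1 - / INR w * logq q (INR (Vball w (2 * d) q)) <= C0)%R /\
    (C0 <= 1 - INR d / INR w * logq q (INR (q - 1)))%R /\
    (w <= 2 * d -> C0 = 0%R).
Proof.
move=> w1 dw q2.
have q0 : 0 < q by lia.
have r0 : rates w d q 0%R.
  exists 1, [set ([ffun _ => Ordinal q0] : word 1 q)]; split => //; split; first by rewrite cards1.
  split.
    by move=> x1 x2 /set1P -> /set1P -> N; case: N.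
  by rewrite cards1 /logq /= ln_1 /Rdiv !Rmult_0_l.
have ub : is_upper_bound (rates w d q) (1 - INR d / INR w * logq q (INR (q - 1)))%R.
  by move=> r [n [F [n0 [F0 [HF ->]]]]]; apply: rate_le.
have [C [HC1 HC2]] := @completeness (rates w d q) (ex_intro _ _ ub) (ex_intro _ _ r0).
exists C; split; first by split.
split.
  have [F [Hfar Hcard]] := gv w d q.
  apply: Rle_trans (@rate_ge w d q F w1 q2 Hcard) _.
  apply: HC1; exists w, F; split => //; split; last by split => //; apply: gv_zero.
  have qw : 0 < q ^ w by rewrite expn_gt0; apply/orP; left; lia.
  by move: Hcard; case: #|F| => //=; lia.
split; first by apply: HC2.
move=> w2d; apply: Rle_antisym; last by apply: HC1.
apply: HC2 => r [n [F [n0 [F0 [HF ->]]]]].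
have -> : #|F| = 1 by have := small_code w1 q0 w2d HF; lia.
rewrite /logq /= ln_1 /Rdiv !Rmult_0_l; apply: Rle_refl.
Qed.
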